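(* Let $d\ge 1$ be an integer and consider the $d$-dimensional Parallel Random Apollonian Network (P-RAN) process described in the context. For an integer $m\ge 0$ let $Nc_t(m)$ be the number of $(d+1)$-cliques in the list $C_t$ having parallel degree $m$ after $t$ steps, and let $|C_t| = d+2+t(d+1)$ be the total number of cliques in $C_t$. Then for every $m\ge 0$, the fraction $\mathbb{E}[Nc_t(m)]/|C_t|$ converges as $t\to\infty$ to $$Pc(m)=\frac{d+1}{(d+2)^{m+1}},$$ i.e. for large $t$ the parallel degree distribution of the P-RAN asymptotically follows this geometric distribution.
   Context: P-RAN process in dimension $d$: at step $t=0$ the graph is a complete graph on $d+2$ vertices, and the list $C_0$ consists of its $d+2$ $(d+1)$-cliques (vertex subsets of size $d+1$). At each step $t\to t+1$, a clique $c$ is chosen uniformly at random from the current list $C_t$; a new vertex $v$ is added to the graph and joined by edges to all $d+1$ vertices of $c$; the clique $c$ stays in the list and the $d+1$ new $(d+1)$-cliques of the form $\{v\}\cup (c\setminus\{u\})$, $u\in c$, are appended to the list. Thus $|C_t|=d+2+t(d+1)$ and the graph has $d+2+t$ vertices. The parallel degree of a clique $c$ in the list is the number of vertices that have been inserted into $c$ (i.e. the number of steps at which $c$ was the chosen clique); newly created cliques have parallel degree $0$. *)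

(* Defs.v *)
From HB Require Import structures.
From mathcomp Require Import all_boot all_order all_algebra.
From mathcomp Require Import all_classical all_reals all_analysis.
Set Implicit Arguments. Unset Strict Implicit. Unset Printing Implicit Defensive.
Import Order.TTheory GRing.Theory Num.Theory.
Local Open Scope ring_scope.

(* A state of the P-RAN process:
   - pr_nv   : number of vertices so far (vertices are 0 .. pr_nv - 1);
   - pr_edges: the edge list of the graph (unordered pairs, stored as pairs);
   - pr_list : the list C_t of (d+1)-cliques, each given as the sequence of its
               vertices, together with its parallel degree. *)
Record pran_state := PRanState {
  pr_nv : nat;
  pr_edges : seq (nat * nat);
  pr_list : seq (seq nat * nat) }.

Definition pran_init (d : nat) : pran_state :=
  let V := iota 0 d.+2 in
  PRanState d.+2
    [seq (u, v) | u <- V, v <- [seq w <- V | (u < w)%N]]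
    [seq (rem u V, 0%N) | u <- V].

Definition pran_step (s : pran_state) (i : nat) : pran_state :=
  let cp := nth ([::], 0%N) (pr_list s) i in
  let c := cp.1 in
  let v := pr_nv s in
  PRanState v.+1
    (pr_edges s ++ [seq (u, v) | u <- c])
    (set_nth ([::], 0%N) (pr_list s) i (c, cp.2.+1)
       ++ [seq (v :: rem u c, 0%N) | u <- c]).

Fixpoint pran_exp {R : numFieldType} (t : nat) (f : pran_state -> R)
    (s : pran_state) : R :=
  match t with
  | 0%N => f s
  | t'.+1 =>
      (size (pr_list s))%:R^-1 *
        \sum_(i < size (pr_list s)) pran_exp t' f (pran_step s i)
  end.

Definition Nc (m : nat) (s : pran_state) : nat :=
  count (fun cp : seq nat * nat => cp.2 == m) (pr_list s).

Definition ENc {R : numFieldType} (d m t : nat) : R :=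
  pran_exp t (fun s => (Nc m s)%:R) (pran_init d).

Definition sizeC (d t : nat) : nat := (d + 2 + t * (d + 1))%N.

(* Main.v *)
Require Import Defs.
From HB Require Import structures.
From mathcomp Require Import all_boot all_order all_algebra.
From mathcomp Require Import all_classical all_reals all_analysis.
From mathcomp Require Import zify ring lra.
Import Order.TTheory GRing.Theory Num.Theory.
Import numFieldNormedType.Exports.
Local Open Scope classical_set_scope.
Local Open Scope ring_scope.

Lemma sum_nth_count (T : Type) (x0 : T) (p : pred T) (l : seq T) :
  (\sum_(i < size l) p (nth x0 l i) = count p l)%N.
Proof.
elim: l => [|x l IH]; first by rewrite big_ord0.
by rewrite /= big_ord_recl /= IH.
Qed.

Definition inv (d t : nat) (s : pran_state) : bool :=
  (size (pr_list s) == sizeC d t) && all (fun cp => size cp.1 == d.+1) (pr_list s).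

Lemma all_set_nth (T : Type) (p : pred T) (x0 y : T) l i :
  (i < size l)%N -> all p l -> p y -> all p (set_nth x0 l i y).
Proof.
elim: l i => [|x l IH] [|i] //= Hi /andP[px pl] py; rewrite ?px ?py ?pl //=.
by apply: IH.
Qed.

Lemma inv_step d t s i : inv d t s -> (i < size (pr_list s))%N ->
  inv d t.+1 (pran_step s i).
Proof.
move=> /andP[/eqP Hs Ha] Hi; rewrite /inv /pran_step /=.
have Hc : size (nth ([::], 0%N) (pr_list s) i).1 = d.+1.
  by apply/eqP; move/all_nthP: Ha; apply.
apply/andP; split.
  rewrite size_cat size_set_nth size_map Hc (maxn_idPr _) // Hs /sizeC.
  apply/eqP; lia.
rewrite all_cat; apply/andP; split.
  apply: (all_set_nth _ _ _ _ _ _ Hi Ha); by rewrite /= Hc.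
apply/allP => x /mapP[u Hu ->] /=.
by rewrite size_rem // Hc.
Qed.

Lemma inv_init d : inv d 0 (pran_init d).
Proof.
rewrite /inv /pran_init size_map size_iota /sizeC.
apply/andP; split; first (apply/eqP; lia).
rewrite all_map; have HV := size_iota 0 d.+2; move: (iota 0 d.+2) HV => V HV.
apply/allP => u Hu /=; by rewrite size_rem // HV.

Qed.

Lemma pran_exp_S (R : numFieldType) t (f : pran_state -> R) s :
  pran_exp t.+1 f s = (size (pr_list s))%:R^-1 *
     \sum_(i < size (pr_list s)) pran_exp t f (pran_step s i).
Proof. by []. Qed.

Lemma pran_exp_succ (R : numFieldType) t (f : pran_state -> R) s :
  pran_exp t.+1 f s =
  pran_exp t (fun s => (size (pr_list s))%:R^-1 *
     \sum_(i < size (pr_list s)) f (pran_step s i)) s.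
Proof.
elim: t s => [|t IH] s //.
rewrite pran_exp_S [RHS]pran_exp_S.
congr (_ * _); apply: eq_bigr => i _; exact: IH.
Qed.

Lemma pran_exp_ext (R : numFieldType) d t0 t (f h : pran_state -> R) s :
  inv d t0 s -> (forall s', inv d (t0 + t) s' -> f s' = h s') ->
  pran_exp t f s = pran_exp t h s.
Proof.
elim: t t0 s => [|t IH] t0 s Hs Hfh; first by apply: Hfh; rewrite addn0.
rewrite !pran_exp_S; congr (_ * _); apply: eq_bigr => i _; apply: (IH t0.+1).
  exact: inv_step.
by move=> s' Hs'; apply: Hfh; rewrite -addSnnS.
Qed.

Lemma pran_expD (R : numFieldType) t (f h : pran_state -> R) s :
  pran_exp t (fun s => f s + h s) s = pran_exp t f s + pran_exp t h s.
Proof.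
elim: t s => [|t IH] s //.
rewrite !pran_exp_S -mulrDr -big_split /=; congr (_ * _); apply: eq_bigr => i _; exact: IH.
Qed.

Lemma pran_expZ (R : numFieldType) t (a : R) (f : pran_state -> R) s :
  pran_exp t (fun s => a * f s) s = a * pran_exp t f s.
Proof.
elim: t s => [|t IH] s //.
rewrite !pran_exp_S.
under eq_bigr => i _ do rewrite IH.
by rewrite -mulr_sumr mulrCA.
Qed.

Lemma pran_exp_cst (R : numFieldType) d t0 t (c : R) s :
  inv d t0 s -> pran_exp t (fun _ => c) s = c.
Proof.
elim: t t0 s => [|t IH] t0 s Hs //.
rewrite pran_exp_S.
under eq_bigr => i _ do rewrite (IH t0.+1 _ (inv_step _ _ _ _ Hs (ltn_ord i))).
rewrite sumr_const card_ord -[c *+ _]mulr_natr mulrCA mulVf ?mulr1 //.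
case/andP: Hs => /eqP -> _; rewrite pnatr_eq0 /sizeC; lia.
Qed.
Lemma count_set_nth_eq (T : Type) (p : pred T) (x0 y : T) l i :
  (i < size l)%N -> (count p (set_nth x0 l i y) + p (nth x0 l i) = count p l + p y)%N.
Proof.
elim: l i => [|x l IH] [|i] //= Hi.
  lia.
rewrite -addnA IH //; lia.
Qed.

Lemma count_step k s i : (i < size (pr_list s))%N ->
  (Nc k (pran_step s i) + ((nth ([::], 0%N) (pr_list s) i).2 == k) =
   Nc k s + ((nth ([::], 0%N) (pr_list s) i).2.+1 == k)
   + (k == 0%N) * size (nth ([::], 0%N) (pr_list s) i).1)%N.
Proof.
move=> Hi; rewrite /Nc /pran_step /= count_cat addnAC.
rewrite (count_set_nth_eq _ (fun cp : seq nat * nat => cp.2 == k)) // count_map /=.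
congr (_ + _)%N.
case: k => [|k].
  rewrite mul1n -[RHS](count_predT); apply: eq_count => x //.
by rewrite mul0n -[RHS](count_pred0 (nth ([::], 0%N) (pr_list s) i).1); apply: eq_count => x.
Qed.
Definition Ncs (k : nat) (s : pran_state) : nat :=
  count (fun cp : seq nat * nat => cp.2.+1 == k) (pr_list s).

Lemma sum_step d t k s : inv d t s ->
  (\sum_(i < size (pr_list s)) Nc k (pran_step s i) + Nc k s =
   size (pr_list s) * Nc k s + Ncs k s + size (pr_list s) * ((k == 0%N) * d.+1))%N.
Proof.
move=> Hs; have Ha := Hs; case/andP: Ha => _ Ha.
rewrite {2}/Nc -(sum_nth_count _ ([::], 0%N) (fun cp : seq nat * nat => cp.2 == k)).
rewrite -big_split /=.
rewrite (eq_bigr (fun i : 'I_(size (pr_list s)) => Nc k s +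
   ((nth ([::], 0%N) (pr_list s) i).2.+1 == k) + (k == 0%N) * d.+1)%N); last first.
  move=> i _; rewrite count_step //.
  by rewrite (eqP (all_nthP _ Ha _ (ltn_ord i))).
rewrite !big_split /= !sum_nat_const card_ord.
by rewrite /Ncs -(sum_nth_count _ ([::], 0%N) (fun cp : seq nat * nat => cp.2.+1 == k)).
Qed.

Lemma g_eq (R : numFieldType) d t k s : inv d t s ->
  (size (pr_list s))%:R^-1 * \sum_(i < size (pr_list s)) ((Nc k (pran_step s i))%:R : R) =
  (1 - (sizeC d t)%:R^-1) * (Nc k s)%:R + (sizeC d t)%:R^-1 * (Ncs k s)%:R
  + ((k == 0%N) * d.+1)%:R.
Proof.
move=> Hs; have HR := congr1 (fun n : nat => (n%:R : R)) (sum_step d t k s Hs).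
rewrite /= !natrD !natrM in HR; rewrite -natr_sum.
case/andP: Hs => /eqP Hsz _; rewrite Hsz in HR *.
move: ((\sum_(i < sizeC d t) Nc k (pran_step s i))%:R : R) HR => S HS.
have HN : ((sizeC d t)%:R : R) != 0 by rewrite pnatr_eq0 /sizeC; lia.
move: ((sizeC d t)%:R : R) HN HS => N HN HS.
have -> : S = N * (Nc k s)%:R + (Ncs k s)%:R + N * ((k == 0%N)%:R * (d.+1)%:R) - (Nc k s)%:R.
  by rewrite -HS addrK.
rewrite natrM.
by field.
Qed.

Lemma ENc_rec0 (R : numFieldType) d t :
  (ENc d 0 t.+1 : R) = (1 - (sizeC d t)%:R^-1) * ENc d 0 t + (d.+1)%:R.
Proof.
rewrite /ENc pran_exp_succ.
rewrite (pran_exp_ext _ d 0 t _ (fun s => (fun s => (1 - (sizeC d t)%:R^-1) * (Nc 0 s)%:R) s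
   + (fun _ => (d.+1)%:R : R) s) _ (inv_init d)); last first.
  move=> s' Hs'; rewrite (g_eq _ _ _ _ _ Hs') /Ncs mul1n.
  rewrite (eq_count (a2 := pred0)) ?count_pred0 ?mulr0 ?addr0 //.
rewrite pran_expD pran_expZ (pran_exp_cst _ d 0) //; exact: inv_init.
Qed.

Lemma ENc_recS (R : numFieldType) d t k :
  (ENc d k.+1 t.+1 : R) = (1 - (sizeC d t)%:R^-1) * ENc d k.+1 t + (sizeC d t)%:R^-1 * ENc d k t.
Proof.
rewrite /ENc pran_exp_succ.
rewrite (pran_exp_ext _ d 0 t _ (fun s => (fun s => (1 - (sizeC d t)%:R^-1) * (Nc k.+1 s)%:R) s
   + (fun s => (sizeC d t)%:R^-1 * (Nc k s)%:R : R) s) _ (inv_init d)); last first.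
  move=> s' Hs'; rewrite (g_eq _ _ _ _ _ Hs') /Ncs mul0n addr0.
  by rewrite (eq_count (a2 := fun cp : seq nat * nat => cp.2 == k)).
by rewrite pran_expD !pran_expZ.
Qed.
Section Asym.
Variable R : realType.
Variable d : nat.

Definition pp (k : nat) : R := (d + 1)%:R / (d + 2)%:R ^+ k.+1.
Definition NN (t : nat) : R := (sizeC d t)%:R.
Definition rr (t k : nat) : R := ENc d k t - pp k * NN t.

Lemma NN_gt0 t : 0 < NN t.
Proof. rewrite /NN ltr0n /sizeC; lia. Qed.

Lemma NN_ge1 t : 1 <= NN t.
Proof. rewrite /NN ler1n /sizeC; lia. Qed.

Lemma NN_S t : NN t.+1 = NN t + (d + 1)%:R.
Proof. rewrite /NN -natrD /sizeC; congr _%:R; lia. Qed.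

Lemma NN_ge t : t%:R <= NN t.
Proof. rewrite /NN ler_nat /sizeC; lia. Qed.

Lemma Hb : (d + 2)%:R = (d + 1)%:R + 1 :> R.
Proof. by rewrite -[1 in RHS]/(1%:R) -natrD; congr _%:R; lia. Qed.

Lemma pp_ge0 k : 0 <= pp k.
Proof. by rewrite /pp divr_ge0 // exprn_ge0. Qed.

Lemma pp_le1 k : pp k <= 1.
Proof.
rewrite /pp ler_pdivrMr ?exprn_gt0 ?ltr0n ?addn2 // mul1r -natrX ler_nat.
rewrite expnS.
have : (0 < d.+2 ^ k)%N by rewrite expn_gt0.
move: (d.+2 ^ k)%N => X HX; nia.
Qed.

Lemma ENc0 k : (ENc d k 0 : R) = if k is 0 then (d + 2)%:R else 0.
Proof.
rewrite /ENc /= /Nc /pran_init count_map.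
case: k => [|k].
  by rewrite (eq_count (a2 := predT)) // count_predT size_iota addn2.
by rewrite (eq_count (a2 := pred0)) // count_pred0.
Qed.

Lemma rr_rec0 t : rr t.+1 0 = (1 - (NN t)^-1) * rr t 0.
Proof.
rewrite /rr ENc_rec0 NN_S -/(NN t) /pp expr1.
have HN : NN t != 0 by rewrite gt_eqF // NN_gt0.
have H2 : (d + 2)%:R != 0 :> R by rewrite pnatr_eq0 addn2.
rewrite Hb in H2 *.
rewrite -addn1 natrD.
field; rewrite natrD in H2; apply/andP; split; [exact: H2 | exact: HN].
Qed.

Lemma rr_recS t k : rr t.+1 k.+1 = (1 - (NN t)^-1) * rr t k.+1 + (NN t)^-1 * rr t k.
Proof.
rewrite /rr ENc_recS NN_S -/(NN t) /pp.
have HN : NN t != 0 by rewrite gt_eqF // NN_gt0.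
have H2 : (d + 2)%:R ^+ k.+1 != 0 :> R by rewrite expf_neq0 // pnatr_eq0 addn2.
rewrite exprS.
move: ((d + 2)%:R ^+ k.+1 : R) H2 => X HX.
rewrite Hb.
have H3 : d%:R + 1 + 1 != 0 :> R.
  apply/negP => /eqP H; have : (0:R) <= d%:R by []. lra.
field; apply/and3P; split; [exact: HX | exact: HN | exact: H3].
Qed.

Lemma rr_bound t k : `|rr t k| <= (d + 2)%:R.
Proof.
elim: t k => [|t IH] k.
  rewrite /rr ENc0 /NN /sizeC mul0n addn0.
  have := pp_ge0 k; have := pp_le1 k.
  have : (0 : R) <= (d + 2)%:R by [].
  case: k => [|k]; move: (pp _) ((d + 2)%:R : R) => p D HD H1 H0.
    rewrite ger0_norm; first nra. nra.
  rewrite sub0r normrN ger0_norm; first nra. nra.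
have Hq0 : 0 <= (NN t)^-1 by rewrite invr_ge0 ltW // NN_gt0.
have Hq1 : (NN t)^-1 <= 1 by rewrite invf_le1 ?NN_gt0 ?NN_ge1.
case: k => [|k].
  rewrite rr_rec0 normrM ger0_norm ?subr_ge0 //.
  have := IH 0%N; have := normr_ge0 (rr t 0).
  move: (`|rr t 0|) ((NN t)^-1) Hq0 Hq1 => x q; nra.
rewrite rr_recS; apply: le_trans (ler_normD _ _) _.
rewrite !normrM [`|1 - _|]ger0_norm ?subr_ge0 // [`|_^-1|]ger0_norm //.
have := IH k.+1; have := IH k.
move: (`|rr t k.+1|) (`|rr t k|) ((NN t)^-1) Hq0 Hq1 => x y q; nra.
Qed.

End Asym.

Theorem mainTheorem1 (R : realType) (d : nat) (hd : (1 <= d)%N) (m : nat) :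
  (fun t : nat => (ENc d m t : R) / (sizeC d t)%:R) @ \oo -->
    ((d + 1)%:R / (d + 2)%:R ^+ m.+1 : R).
Proof.
apply/cvgrPdist_le => e e0.
near=> t.
have Ht : (d + 2)%:R / e <= t%:R :> R by near: t; exact: nbhs_infty_ger.
change ((d + 1)%:R / (d + 2)%:R ^+ m.+1 : R) with (pp R d m).
change ((sizeC d t)%:R : R) with (NN R d t).
have HN := NN_gt0 R d t.
have -> : (ENc d m t : R) = rr R d t m + pp R d m * NN R d t by rewrite /rr subrK.
have -> : pp R d m - (rr R d t m + pp R d m * NN R d t) / NN R d t
        = - (rr R d t m / NN R d t).
  by field; rewrite gt_eqF.
rewrite normrN normrM (gtr0_norm (x := (NN R d t)^-1)); last by rewrite invr_gt0.
rewrite ler_pdivrMr //.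
have Hr := rr_bound R d t m.
have Hg := NN_ge R d t.
rewrite ler_pdivrMr // in Ht.
nra.
Unshelve. all: end_near.
Qed.
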